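(* The complex linear span $\mathcal{L}=\{\sum_{l,m=1}^n a^m_l Y^l_m : a^m_l\in\mathbf{C}\}$ is closed under the Lie bracket of vector fields and has dimension $n^2-1$ over $\mathbf{C}$; hence it is an $(n^2-1)$-dimensional Lie algebra.
   Context: Coordinates $x=(x_1,\dots,x_n)\in\mathbf{C}^n$, $n\ge2$, working on the open set $\{u\ne0\}$. Notation: $u=\sum_{j=1}^n x_j$, $D=\sum_{j=1}^n x_j\,\partial/\partial x_j$, and for $l,m\in\{1,\dots,n\}$, $Y^l_m = x_m u^{l-m-1}\big(D-u\,\partial/\partial x_l\big)$. *)

(* Defs.v *)
From mathcomp Require Import all_boot all_algebra.
From mathcomp Require Import complex Rstruct.
From mathcomp Require Import mpoly.
Set Implicit Arguments. Unset Strict Implicit. Unset Printing Implicit Defensive.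
Import GRing.Theory.
Local Open Scope ring_scope.

Definition C : fieldType := complex Rdefinitions.R.

Section VF.
Variable n : nat.

Definition Poly := {mpoly C[n]}.
Definition Rat := {fraction Poly}.

Definition pfrac (p : Poly) : Rat := @FracField.tofrac Poly p.

Definition cst (a : C) : Rat := pfrac (a%:MP).
Definition xc (j : 'I_n) : Rat := pfrac 'X_j.

Definition usum : Rat := \sum_(j < n) xc j.

Definition pderiv (i : 'I_n) (f : Rat) : Rat :=
  let r := repr f in
  pfrac ((mderiv i (\n_r)) * \d_r - \n_r * (mderiv i (\d_r)))
    / pfrac ((\d_r) ^+ 2).

(* A (rational) vector field V = sum_i V i * d/dx_i. *)
Definition vfield := 'I_n -> Rat.

Definition vapply (V : vfield) (f : Rat) : Rat := \sum_(i < n) V i * pderiv i f.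

Definition lie (V W : vfield) : vfield :=
  fun i => vapply V (W i) - vapply W (V i).

(* The vector field Y^l_m = x_m u^(l-m-1) (D - u d/dx_l), where
   D = sum_j x_j d/dx_j; the exponent is an integer (possibly negative). *)
Definition Y (l m : 'I_n) : vfield :=
  fun i => xc m * usum ^ ((l : int) - (m : int) - 1)
             * (xc i - (if i == l then usum else 0)).

Definition Lspan : vfield -> Prop :=
  fun V => exists a : 'I_n -> 'I_n -> C,
    forall i, V i = \sum_(l < n) \sum_(m < n) cst (a l m) * Y l m i.

Definition Ccomb (k : nat) (b : 'I_k -> vfield) (c : 'I_k -> C) : vfield :=
  fun i => \sum_(t < k) cst (c t) * b t i.

Definition Cindep (k : nat) (b : 'I_k -> vfield) : Prop :=
  forall c : 'I_k -> C, (forall i, Ccomb b c i = 0) -> forall t, c t = 0.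

Definition Cbasis (S : vfield -> Prop) (k : nat) (b : 'I_k -> vfield) : Prop :=
  [/\ forall t, S (b t),
      Cindep b &
      forall V, S V -> exists c : 'I_k -> C, forall i, V i = Ccomb b c i].

Definition has_Cdim (S : vfield -> Prop) (d : nat) : Prop :=
  exists b : 'I_d -> vfield, Cbasis S b.

End VF.

(* Main.v *)
Require Import Defs.
From mathcomp Require Import all_boot all_algebra generic_quotient.
From mathcomp Require Import complex Rstruct mpoly.
From mathcomp Require Import ring zify.
Set Implicit Arguments. Unset Strict Implicit. Unset Printing Implicit Defensive.
Import GRing.Theory.
Local Open Scope ring_scope.

Lemma frac_nd (R : idomainType) (x : {fraction R}) :
  x * (@FracField.tofrac R \d_(repr x)) = (@FracField.tofrac R \n_(repr x)).
Proof.
rewrite -{1}[x]reprK; set r := repr x; rewrite !piE.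
apply/eqmodP => /=; rewrite FracField.equivfE /FracField.mulf /=.
rewrite !numden_Ratio ?mulf_neq0 ?denom_ratioP ?oner_neq0 //.
by rewrite !mulr1 mulrC.
Qed.

Lemma aux_e3 (R : comRingType) (a b p q a' b' p' q' : R) :
  p * b = a * q -> p' * b + p * b' = a' * q + a * q' ->
  (a' * b - a * b') * q ^+ 2 = (p' * q - p * q') * b ^+ 2.
Proof.
move=> e1 e2; apply/eqP; rewrite -subr_eq0; apply/eqP.
transitivity ((b'*q + b*q') * (p*b - a*q)
     - (b*q) * (p'*b + p*b' - (a'*q + a*q'))); first by ring.
by rewrite e1 e2 !subrr; ring.
Qed.

Lemma aux_div (K : fieldType) (X B2 Y Q2 : K) : B2 != 0 -> Q2 != 0 ->
  X * Q2 = Y * B2 -> X / B2 = Y / Q2.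
Proof. by move=> hb hq e; apply/eqP; rewrite eqr_div // e. Qed.

Lemma auxD (K : fieldType) (A B C D A' B' C' D' : K) : B != 0 -> D != 0 ->
  ((A' * D + A * D' + (C' * B + C * B')) * (B * D) - (A * D + C * B) * (B' * D + B * D'))
   / (B * D) ^+ 2 = (A' * B - A * B') / B ^+ 2 + (C' * D - C * D') / D ^+ 2.
Proof. by move=> hb hd; field; rewrite hb hd. Qed.

Lemma auxM (K : fieldType) (A B C D A' B' C' D' : K) : B != 0 -> D != 0 ->
  ((A' * C + A * C') * (B * D) - (A * C) * (B' * D + B * D')) / (B * D) ^+ 2
  = (A' * B - A * B') / B ^+ 2 * (C / D) + (A / B) * ((C' * D - C * D') / D ^+ 2).
Proof. by move=> hb hd; field; rewrite hb hd. Qed.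

Lemma auxS (K : fieldType) (A B C D : K) : B != 0 -> D != 0 ->
  A / B + C / D = (A * D + C * B) / (B * D).
Proof. by move=> hb hd; field; rewrite hb hd. Qed.

Lemma auxP (K : fieldType) (A B C D : K) : 
  A / B * (C / D) = (A * C) / (B * D).
Proof. by rewrite invfM mulrACA. Qed.

Lemma aux_lie (R : comRingType) (bmp bql : bool) (xm xq us ut wp wl Ulq Upm u : R) :
  (bmp -> Ulq = u * us * ut) -> (bql -> Upm = u * us * ut) ->
  xm * us * (xq - (if bql then u else 0)) * ut * wp + xq * ut * (xm * us * wl)
  - (xq * ut * (xm - (if bmp then u else 0)) * us * wl + xm * us * (xq * ut * wp))
  = bmp%:R * (xq * Ulq * wl) - bql%:R * (xm * Upm * wp).
Proof.
case: bmp; case: bql => /= h1 h2.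
- by rewrite (h1 isT) (h2 isT); ring.
- by rewrite (h1 isT); ring.
- by rewrite (h2 isT); ring.
- by ring.
Qed.

Lemma aux_expz (K : fieldType) (u : K) (a b c : int) : u != 0 -> c = a + b + 1 ->
  u ^ c = u * u ^ a * u ^ b.
Proof.
move=> u0 ->; rewrite expfzDr // expfzDr // expr1z.
by rewrite mulrC mulrA.
Qed.

Lemma aux4 (R : comRingType) (a x A w B E : R) : A * B = E ->
  a * (x * A * w) * B = a * x * E * w.
Proof. by move=> <-; ring. Qed.

Lemma aux5 (R : comRingType) (a b c : R) : a * b * c - c * b * a = 0.
Proof. by ring. Qed.

Lemma aux6 (R : comRingType) (c x w xi t : R) :
  c * (x * w * (xi - t)) = w * xi * (c * x) - w * (c * x * t).
Proof. by ring. Qed.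

Lemma aux7 (R : comRingType) (w xi S c u : R) :
  w * xi * S - w * (c * xi * u) = w * xi * (S - c * u).
Proof. by ring. Qed.

Lemma aux8 (R : comRingType) (x w xi t : R) :
  x * w * (xi - t) = w * xi * x - w * (x * t).
Proof. by ring. Qed.

Lemma sum_divmod (R : nmodType) (p j : nat) (G : nat -> nat -> R) : (0 < p)%N ->
  \sum_(0 <= t < j * p) G (t %/ p)%N (t %% p)%N = \sum_(0 <= l < j) \sum_(0 <= m < p) G l m.
Proof.
move=> p0; elim: j => [|j IH]; first by rewrite mul0n !big_geq.
rewrite (big_cat_nat _ (n := (j * p)%N)) ?leq_mul2r ?leqnSn ?orbT //= IH.
rewrite big_nat_recr //=; congr (_ + _).
rewrite -{1}[(j * p)%N]add0n big_addn mulSn addnK.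
apply: eq_big_nat => t /andP [_ ht].
by rewrite addnC divnMDl // divn_small // addn0 modnMDl modn_small.
Qed.

Section Der.
Variable n : nat.
Local Notation P := (Defs.Poly n).
Local Notation F := (Defs.Rat n).
Local Notation pf := (@pfrac n).
Implicit Types V : vfield n.

Lemma pf_inj (p q : P) : pf p = pf q -> p = q.
Proof. by move=> h; apply/eqP; rewrite -(tofrac_eq (R:=P)); apply/eqP. Qed.

Lemma pf_neq0 (p : P) : p != 0 -> pf p != 0.
Proof. by rewrite /pfrac tofrac_eq0. Qed.

Lemma frac_rep (f : F) : exists a b : P, b != 0 /\ f = pf a / pf b.
Proof.
exists \n_(repr f), \d_(repr f); split; first exact: denom_ratioP.
by rewrite /pfrac -(frac_nd f) mulfK // tofrac_eq0 denom_ratioP.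
Qed.

Lemma pderiv_frac i (p q : P) : q != 0 ->
  pderiv i (pf p / pf q) =
  (pf (p^`M(i)) * pf q - pf p * pf (q^`M(i))) / (pf q) ^+ 2.
Proof.
move=> q0; rewrite /pderiv.
have h := frac_nd (pf p / pf q).
have b0 := denom_ratioP (repr (pf p / pf q)).
move: h b0; set r := repr _; move: (\n_r) (\d_r) => a b h b0.
have e1 : p * b = a * q.
  have ha : pf a = pf p / pf q * pf b := esym h.
  apply: pf_inj.
  have -> : pf (p*b) = pf p * pf b by rewrite /pfrac rmorphM.
  have -> : pf (a*q) = pf a * pf q by rewrite /pfrac rmorphM.
  by rewrite ha mulrAC divfK // pf_neq0.
have e2 := congr1 (mderiv i) e1; rewrite !mderivM in e2.
have e3 := aux_e3 e1 e2.
move/(congr1 pf): e3; rewrite /pfrac tofracM [in RHS]tofracM tofracXn => e3.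
rewrite -/(pfrac _); apply: aux_div; rewrite ?pf_neq0 ?expf_neq0 ?pf_neq0 //.
by rewrite /pfrac e3 tofracB !tofracM.
Qed.

Lemma pderiv_pf i (p : P) : pderiv i (pf p) = pf (p^`M(i)).
Proof.
have e := pderiv_frac i p (oner_neq0 P).
rewrite /pfrac tofrac1 divr1 in e; rewrite e.
by rewrite -mpolyC1 mderivC tofrac0 mulr0 subr0 mulr1 expr1n divr1.
Qed.

Lemma pderiv_cst i c : pderiv i (cst n c) = 0.
Proof. by rewrite /cst pderiv_pf mderivC /pfrac tofrac0. Qed.

Lemma pderiv_xc i (j : 'I_n) : pderiv i (xc j) = (j == i)%:R.
Proof.
rewrite /xc pderiv_pf mderivX mnm1E.
case: eqP => [->|_]; last by rewrite scale0r /pfrac tofrac0.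
have -> : (U_(i) - U_(i))%MM = 0%MM by apply/mnmP => k; rewrite mnmBE subnn mnm0E.
by rewrite mpolyX0 scale1r /pfrac tofrac1.
Qed.

Lemma pderivD i (f g : F) : pderiv i (f + g) = pderiv i f + pderiv i g.
Proof.
have [a [b [b0 ->]]] := frac_rep f.
have [c [d [d0 ->]]] := frac_rep g.
rewrite auxS ?pf_neq0 //.
have -> : pf a * pf d + pf c * pf b = pf (a * d + c * b) by rewrite /pfrac tofracD !tofracM.
have -> : pf b * pf d = pf (b * d) by rewrite /pfrac tofracM.
rewrite !pderiv_frac ?mulf_neq0 //.
rewrite mderivD !mderivM.
move: (a^`M(i)) (b^`M(i)) (c^`M(i)) (d^`M(i)) => a' b' c' d'.
rewrite /pfrac !tofracD !tofracM.
by apply: auxD; rewrite -/(pfrac _) pf_neq0.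
Qed.

Lemma pderivM i (f g : F) : pderiv i (f * g) = pderiv i f * g + f * pderiv i g.
Proof.
have [a [b [b0 ->]]] := frac_rep f.
have [c [d [d0 ->]]] := frac_rep g.
rewrite auxP.
have -> : pf a * pf c = pf (a * c) by rewrite /pfrac tofracM.
have -> : pf b * pf d = pf (b * d) by rewrite /pfrac tofracM.
rewrite !pderiv_frac ?mulf_neq0 //.
rewrite !mderivM.
move: (a^`M(i)) (b^`M(i)) (c^`M(i)) (d^`M(i)) => a' b' c' d'.
rewrite /pfrac !tofracD !tofracM.
by apply: auxM; rewrite -/(pfrac _) pf_neq0.
Qed.

Lemma pderiv0 i : pderiv i (0 : F) = 0.
Proof.
have h := pderivD i 0 0; rewrite addr0 in h.
by apply: (addrI (pderiv i 0)); rewrite -h addr0.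
Qed.

Lemma pderivN i (f : F) : pderiv i (- f) = - pderiv i f.
Proof.
have h := pderivD i f (- f); rewrite subrr pderiv0 in h.
by apply: (addrI (pderiv i f)); rewrite -h subrr.
Qed.

Lemma pderivB i (f g : F) : pderiv i (f - g) = pderiv i f - pderiv i g.
Proof. by rewrite pderivD pderivN. Qed.

Lemma cst_nat k : cst n (k%:R) = k%:R.
Proof. by rewrite /cst /pfrac mpolyC_nat rmorph_nat. Qed.

Lemma cstD a b : cst n (a + b) = cst n a + cst n b.
Proof. by rewrite /cst /pfrac mpolyCD tofracD. Qed.

Lemma cstM a b : cst n (a * b) = cst n a * cst n b.
Proof. by rewrite /cst /pfrac mpolyCM tofracM. Qed.

Lemma cstB a b : cst n (a - b) = cst n a - cst n b.
Proof. by rewrite /cst /pfrac mpolyCB tofracB. Qed.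

Lemma cstN a : cst n (- a) = - cst n a.
Proof. by rewrite /cst /pfrac mpolyCN tofracN. Qed.

Lemma cst1 : cst n 1 = 1.
Proof. by rewrite /cst /pfrac mpolyC1 tofrac1. Qed.

Lemma cst0 : cst n 0 = 0.
Proof. by rewrite /cst /pfrac mpolyC0 tofrac0. Qed.

Lemma cst_inj a b : cst n a = cst n b -> a = b.
Proof. by move/pf_inj/eqP; rewrite mpolyC_eq => /eqP. Qed.

Lemma vapplyD V (f g : F) : vapply V (f + g) = vapply V f + vapply V g.
Proof. by rewrite /vapply -big_split /=; apply: eq_bigr => i _; rewrite pderivD mulrDr. Qed.

Lemma vapplyN V (f : F) : vapply V (- f) = - vapply V f.
Proof. by rewrite /vapply -sumrN; apply: eq_bigr => i _; rewrite pderivN mulrN. Qed.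

Lemma vapplyB V (f g : F) : vapply V (f - g) = vapply V f - vapply V g.
Proof. by rewrite vapplyD vapplyN. Qed.

Lemma vapply0 V : vapply V 0 = 0.
Proof. by rewrite /vapply big1 // => i _; rewrite pderiv0 mulr0. Qed.

Lemma vapplyM V (f g : F) : vapply V (f * g) = vapply V f * g + f * vapply V g.
Proof.
rewrite /vapply mulr_suml mulr_sumr -big_split /=; apply: eq_bigr => i _.
by rewrite pderivM mulrDr mulrA; congr (_ + _); exact: mulrCA.
Qed.

Lemma vapply_cst V c : vapply V (cst n c) = 0.
Proof. by rewrite /vapply big1 // => i _; rewrite pderiv_cst mulr0. Qed.

Lemma vapply_cstM V c (f : F) : vapply V (cst n c * f) = cst n c * vapply V f.
Proof. by rewrite vapplyM vapply_cst mul0r add0r. Qed.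

Lemma vapply_sum V (I : Type) (r : seq I) (G : I -> F) :
  vapply V (\sum_(k <- r) G k) = \sum_(k <- r) vapply V (G k).
Proof.
elim: r => [|x r IH]; first by rewrite !big_nil vapply0.
by rewrite !big_cons vapplyD IH.
Qed.

Lemma vapply_xc V j : vapply V (xc j) = V j.
Proof.
rewrite /vapply (bigD1 j) //= pderiv_xc eqxx mulr1 big1 ?addr0 // => i hij.
by rewrite pderiv_xc eq_sym (negbTE hij) mulr0.
Qed.

Lemma vapply_lin (I : Type) (r : seq I) (c : I -> C) (W : I -> vfield n) V (f : F) :
  (forall i, V i = \sum_(k <- r) cst n (c k) * W k i) ->
  vapply V f = \sum_(k <- r) cst n (c k) * vapply (W k) f.
Proof.
move=> hV; rewrite /vapply.
under eq_bigr => i _ do rewrite hV mulr_suml.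
rewrite exchange_big /=; apply: eq_bigr => k _.
by rewrite mulr_sumr; apply: eq_bigr => i _; rewrite mulrA.
Qed.

Lemma vapply_expz V (x : F) (k : int) : vapply V x = 0 -> x != 0 ->
  vapply V (x ^ k) = 0.
Proof.
move=> h x0.
have hn : forall m : nat, vapply V (x ^+ m) = 0.
  elim=> [|m IH]; first by rewrite expr0 -cst1 vapply_cst.
  by rewrite exprS vapplyM h IH mul0r mulr0 addr0.
case: k => m; first exact: hn.
rewrite /exprz.
set y := x ^+ m.+1.
have y0 : y != 0 by rewrite expf_neq0.
have e : y * y^-1 = 1 by rewrite mulfV.
have := congr1 (vapply V) e; rewrite vapplyM hn mul0r add0r -cst1 vapply_cst.
by move/eqP; rewrite mulf_eq0 (negbTE y0) /= => /eqP.
Qed.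

Lemma usum_neq0 : (0 < n)%N -> usum n != 0.
Proof.
move=> n0; set k : 'I_n := Ordinal n0.
have -> : usum n = pf (\sum_(j < n) 'X_j) by rewrite /usum /pfrac rmorph_sum.
apply: pf_neq0; apply/negP => /eqP h.
have := congr1 (meval (fun j : 'I_n => ((j == k)%:R : C))) h.
rewrite meval0 rmorph_sum /=.
under eq_bigr => j _ do rewrite mevalXU.
rewrite (bigD1 k) //= ?eqxx big1 ?addr0 => [|j /negbTE -> //].
by move/eqP; rewrite oner_eq0.
Qed.

Lemma xc_neq0 (j : 'I_n) : xc j != 0.
Proof.
apply: pf_neq0; apply/negP => /eqP h.
have := congr1 (meval (fun j : 'I_n => (1 : C))) h.
by rewrite meval0 mevalXU => /eqP; rewrite oner_eq0.
Qed.

Lemma vapply_usum V : vapply V (usum n) = \sum_j V j.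
Proof. by rewrite /usum vapply_sum; apply: eq_bigr => j _; rewrite vapply_xc. Qed.

Lemma sum_ite (l : 'I_n) (x : F) : \sum_(j < n) (if j == l then x else 0) = x.
Proof. by rewrite -big_mkcond big_pred1_eq. Qed.

Lemma Y_sum (l m : 'I_n) : \sum_j Y l m j = 0.
Proof.
rewrite /Y -mulr_sumr sumrB sum_ite.
by rewrite -/(usum n) subrr mulr0.
Qed.

Lemma vapplyY V (p q i : 'I_n) : (0 < n)%N -> \sum_j V j = 0 ->
  vapply V (Y p q i) =
  V q * usum n ^ ((p : int) - (q : int) - 1) * (xc i - (if i == p then usum n else 0))
  + xc q * usum n ^ ((p : int) - (q : int) - 1) * V i.
Proof.
move=> n0 hV.
have hu : vapply V (usum n) = 0 by rewrite vapply_usum.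
rewrite /Y !vapplyM vapplyB vapply_xc vapply_xc vapply_expz ?usum_neq0 //.
have -> : vapply V (if i == p then usum n else 0) = 0.
  by case: (i == p); rewrite ?hu ?vapply0.
by rewrite mulr0 addr0 subr0.
Qed.

Lemma lieY (l m p q i : 'I_n) : (0 < n)%N ->
  lie (Y l m) (Y p q) i = cst n ((m == p)%:R) * Y l q i - cst n ((q == l)%:R) * Y p m i.
Proof.
move=> n0; rewrite /lie !vapplyY ?Y_sum // !cst_nat /Y.
apply: aux_lie.
- move/eqP=> <-; apply: aux_expz; first exact: usum_neq0.
  by ring.
- move/eqP=> ->; apply: aux_expz; first exact: usum_neq0.
  by ring.
Qed.

End Der.

Section Indep.
Variable n : nat.
Local Notation P := (Defs.Poly n).
Local Notation F := (Defs.Rat n).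
Local Notation pf := (@pfrac n).
Definition Usum : P := \sum_(j < n) 'X_j.

Lemma usumE : usum n = pf Usum.
Proof. by rewrite /usum /Usum /pfrac rmorph_sum. Qed.

Lemma meval_sum (v : 'I_n -> C) (I : Type) (r : seq I) (G : I -> P) :
  meval v (\sum_(k <- r) G k) = \sum_(k <- r) meval v (G k).
Proof.
elim: r => [|x r IH]; first by rewrite !big_nil meval0.
by rewrite !big_cons mevalD IH.
Qed.

Lemma meval_exp (v : 'I_n -> C) (p : P) e : meval v (p ^+ e) = meval v p ^+ e.
Proof.
elim: e => [|e IH]; first by rewrite !expr0 meval1.
by rewrite !exprS mevalM IH.
Qed.

Lemma term_poly (d : C) (l m i : 'I_n) :
  cst n d * Y l m i * usum n ^+ n =
  pf (d%:MP * 'X_m * Usum ^+ (l + n - m.+1) * ('X_i - (if i == l then Usum else 0))).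
Proof.
have n0 : (0 < n)%N by case: (m) => /= m' hm; apply: leq_ltn_trans hm.
rewrite /pfrac tofracM tofracM tofracM tofracXn tofracB (fun_if (@FracField.tofrac _)) tofrac0.
rewrite -!/(pfrac _) -usumE /Y.
apply: aux4.
rewrite exprnP exprnP -expfzDr ?usum_neq0 //.
congr (_ ^ _); have := ltn_ord m; lia.
Qed.

Lemma indep_core (d : 'I_n -> 'I_n -> C) :
  (forall i, \sum_(l < n) \sum_(m < n) cst n (d l m) * Y l m i = 0) ->
  (forall l m, l != m -> d l m = 0) /\ (forall l m, d l l = d m m).
Proof.
move=> h.
have off : forall i k : 'I_n, i != k -> d i k = 0.
  move=> i k hik.
  pose Pi := \sum_(l < n) \sum_(m < n)
     (d l m)%:MP * 'X_m * Usum ^+ (l + n - m.+1) * ('X_i - (if i == l then Usum else 0)).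
  have hP : Pi = 0.
    apply: pf_inj; rewrite [pf 0]/pfrac tofrac0.
    have := congr1 (fun x => x * usum n ^+ n) (h i); rewrite /= mul0r => <-.
    rewrite /Pi /pfrac rmorph_sum mulr_suml; apply: eq_bigr => l _.
    rewrite rmorph_sum mulr_suml; apply: eq_bigr => m _.
    by rewrite term_poly.
  pose v := fun j : 'I_n => ((j == k)%:R : C).
  have hv : meval v Usum = 1.
    rewrite /Usum meval_sum.
    under eq_bigr => j _ do rewrite mevalXU.
    by rewrite /v (bigD1 k) //= eqxx big1 ?addr0 // => j /negbTE ->.
  have := congr1 (meval v) hP; rewrite meval0 /Pi meval_sum.
  under eq_bigr => l _ do rewrite meval_sum.
  under eq_bigr => l _ do under eq_bigr => m _ do
    rewrite !mevalM mevalC mevalXU meval_exp hv expr1n mulr1 mevalB mevalXU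
            (fun_if (meval v)) hv meval0.
  rewrite /v (negbTE hik) /=.
  have e : forall l : 'I_n, \sum_(m < n) d l m * (m == k)%:R * (0 - (if i == l then 1 else 0))
      = d l k * (0 - (if i == l then 1 else 0)).
    move=> l; rewrite (bigD1 k) //= eqxx mulr1 big1 ?addr0 // => m /negbTE ->.
    by rewrite mulr0 mul0r.
  under eq_bigr => l _ do rewrite e.
  rewrite (bigD1 i) //= eqxx big1 ?addr0; last first.
    by move=> l hl; rewrite eq_sym (negbTE hl) subrr mulr0.
  by rewrite sub0r mulrN1 => /eqP; rewrite oppr_eq0 => /eqP.
split=> // l m.
have n0 : (0 < n)%N := leq_ltn_trans (leq0n _) (ltn_ord l).
have key : forall i, cst n (d i i) * usum n = \sum_(j < n) cst n (d j j) * xc j.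
  move=> i; have := h i.
  have e1 : \sum_(l < n) \sum_(m < n) cst n (d l m) * Y l m i
           = \sum_(l < n) cst n (d l l) * Y l l i.
    apply: eq_bigr => l' _; rewrite (bigD1 l') //= big1 ?addr0 // => m' hm.
    by rewrite off ?cst0 ?mul0r // eq_sym.
  rewrite e1.
  under eq_bigr => l' _ do rewrite /Y subrr aux6.
  rewrite sumrB -mulr_sumr.
  have e2 : \sum_(l' < n) usum n ^ (0 - 1) *
      (cst n (d l' l') * xc l' * (if i == l' then usum n else 0))
      = usum n ^ (0 - 1) * (cst n (d i i) * xc i * usum n).
    rewrite (bigD1 i) //= eqxx big1 ?addr0 // => l' hl.
    by rewrite eq_sym (negbTE hl) !mulr0.
  rewrite e2.
  move/eqP; rewrite aux7 mulf_eq0 (negbTE (mulf_neq0 (expfz_neq0 _ (usum_neq0 n0)) (xc_neq0 i))) /=.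
  by rewrite subr_eq0 => /eqP ->.
apply: cst_inj; apply: (mulIf (usum_neq0 n0)).
by rewrite !key.
Qed.

Lemma Ydiag_sum (i : 'I_n) : (0 < n)%N -> \sum_(l < n) Y l l i = 0.
Proof.
move=> n0; rewrite /Y.
under eq_bigr => l _ do rewrite subrr aux8.
rewrite sumrB -mulr_sumr -/(usum n).
have e2 : \sum_(l < n) usum n ^ (0 - 1) * (xc l * (if i == l then usum n else 0))
      = usum n ^ (0 - 1) * (xc i * usum n).
  rewrite (bigD1 i) //= eqxx big1 ?addr0 // => l hl.
  by rewrite eq_sym (negbTE hl) !mulr0.
by rewrite e2 mulrA subrr.
Qed.

End Indep.

Section Span.
Variable n : nat.
Local Notation F := (Defs.Rat n).
Implicit Types V W : vfield n.

Lemma Lspan_ext V W : Lspan V -> (forall i, W i = V i) -> Lspan W.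
Proof. by case=> a ha hW; exists a => i; rewrite hW ha. Qed.

Lemma Lspan0 : Lspan (fun _ : 'I_n => 0 : F).
Proof.
exists (fun _ _ => 0) => i; symmetry.
by apply: big1 => l _; apply: big1 => m _; rewrite cst0 mul0r.
Qed.

Lemma LspanD V W : Lspan V -> Lspan W -> Lspan (fun i => V i + W i).
Proof.
case=> a ha [b hb]; exists (fun l m => a l m + b l m) => i.
rewrite ha hb -big_split; apply: eq_bigr => l _ /=.
by rewrite -big_split; apply: eq_bigr => m _ /=; rewrite cstD mulrDl.
Qed.

Lemma LspanZ c V : Lspan V -> Lspan (fun i => cst n c * V i).
Proof.
case=> a ha; exists (fun l m => c * a l m) => i.
rewrite ha mulr_sumr; apply: eq_bigr => l _.
by rewrite mulr_sumr; apply: eq_bigr => m _; rewrite cstM mulrA.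
Qed.

Lemma Lspan_sum (I : Type) (r : seq I) (G : I -> vfield n) :
  (forall k, Lspan (G k)) -> Lspan (fun i => \sum_(k <- r) G k i).
Proof.
move=> hG; elim: r => [|x r IH].
  by apply: Lspan_ext Lspan0 _ => i; rewrite big_nil.
apply: Lspan_ext (LspanD (hG x) IH) _ => i; by rewrite big_cons.
Qed.

Lemma LspanY (l m : 'I_n) : Lspan (Y l m).
Proof.
exists (fun l' m' => ((l' == l) && (m' == m))%:R) => i.
rewrite (bigD1 l) //= [X in _ + X]big1 ?addr0; last first.
  by move=> l' hl; apply: big1 => m' _; rewrite (negbTE hl) cst_nat mul0r.
rewrite (bigD1 m) //= [X in _ + X]big1 ?addr0; last first.
  by move=> m' hm; rewrite eqxx (negbTE hm) cst_nat mul0r.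
by rewrite !eqxx cst_nat mul1r.
Qed.

Local Notation IP := ('I_n * 'I_n)%type.

Lemma Lspan_pair V : Lspan V -> exists a : IP -> C,
  forall i, V i = \sum_(k : IP) cst n (a k) * Y k.1 k.2 i.
Proof. by case=> a ha; exists (fun k => a k.1 k.2) => i; rewrite ha pair_big. Qed.

Lemma lie_closed V W : (0 < n)%N -> Lspan V -> Lspan W -> Lspan (lie V W).
Proof.
move=> n0 /Lspan_pair [a ha] /Lspan_pair [b hb].
apply: (@Lspan_ext (fun i => \sum_(k : IP) cst n (a k) *
   \sum_(k' : IP) cst n (b k') * lie (Y k.1 k.2) (Y k'.1 k'.2) i)).
  apply: Lspan_sum => k; apply: LspanZ; apply: Lspan_sum => k'; apply: LspanZ.
  apply: Lspan_ext (LspanD (LspanZ _ (LspanY k.1 k'.2)) (LspanZ (- ((k'.2 == k.1)%:R)) (LspanY k'.1 k.2))) _.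
  by move=> i; rewrite lieY // cstN mulNr.
move=> i.
have e1 : vapply V (W i) = \sum_(k : IP) \sum_(k' : IP)
     cst n (a k) * (cst n (b k') * vapply (Y k.1 k.2) (Y k'.1 k'.2 i)).
  rewrite (vapply_lin _ ha); apply: eq_bigr => k _.
  rewrite hb vapply_sum mulr_sumr; apply: eq_bigr => k' _.
  by rewrite vapply_cstM.
have e2 : vapply W (V i) = \sum_(k : IP) \sum_(k' : IP)
     cst n (a k) * (cst n (b k') * vapply (Y k'.1 k'.2) (Y k.1 k.2 i)).
  rewrite (vapply_lin _ hb) [RHS]exchange_big /=; apply: eq_bigr => k' _.
  rewrite ha vapply_sum mulr_sumr; apply: eq_bigr => k _.
  by rewrite vapply_cstM mulrCA.
rewrite /lie e1 e2 -sumrB; apply: eq_bigr => k _.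
rewrite mulr_sumr -sumrB; apply: eq_bigr => k' _.
by rewrite -!mulrBr.
Qed.

End Span.

Section Dim.
Variable k : nat.
Local Notation n := k.+1.
Definition NN := (n ^ 2 - 1)%N.

Lemma NS : NN.+1 = (n * n)%N.
Proof. by rewrite /NN -mulnn; have := muln_gt0 n n; rewrite ltn0Sn /=; lia. Qed.

Definition bas (t : 'I_NN) : vfield n := Y (inord (t %/ n)%N) (inord (t %% n)%N).
Definition cext (c : 'I_NN -> C) (t : nat) : C := if insub t is Some u then c u else 0.

Lemma comb_eq c i : Ccomb bas c i =
  \sum_(l < n) \sum_(m < n) cst n (cext c (l * n + m)%N) * Y l m i.
Proof.
rewrite /Ccomb.
transitivity (\sum_(0 <= t < NN) cst n (cext c t) * Y (inord (t %/ n)%N) (inord (t %% n)%N) i).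
  by rewrite big_mkord; apply: eq_bigr => t _; rewrite /cext valK.
transitivity (\sum_(0 <= t < (n * n)%N) cst n (cext c t) * Y (inord (t %/ n)%N) (inord (t %% n)%N) i).
  by rewrite -NS big_nat_recr //= /cext insubF ?ltnn // cst0 mul0r addr0.
pose G := fun l m => cst n (cext c (l * n + m)%N) * Y (inord l) (inord m) i.
have e := @sum_divmod _ n n G (ltn0Sn k).
transitivity (\sum_(0 <= l < n) \sum_(0 <= m < n) G l m).
  by rewrite -e; apply: eq_bigr => t _; rewrite /G -divn_eq.
rewrite big_mkord; apply: eq_bigr => l _.
by rewrite big_mkord; apply: eq_bigr => m _; rewrite /G !inord_val.
Qed.

Lemma bas_indep : Cindep bas.
Proof.
move=> c hc t.
have h : forall i, \sum_(l < n) \sum_(m < n) cst n (cext c (l * n + m)%N) * Y l m i = 0.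
  by move=> i; rewrite -comb_eq hc.
have [off diag] := indep_core h.
have hL : cext c (@ord_max k * n + @ord_max k)%N = 0.
  rewrite /cext insubF //; apply/negbTE; rewrite -leqNgt /=.
  have := NS; nia.
have all0 : forall l m : 'I_n, cext c (l * n + m)%N = 0.
  move=> l m; case: (eqVneq l m) => [<-|hlm]; last exact: off.
  by rewrite (diag l ord_max).
have ht := ltn_ord t.
have := all0 (inord (t %/ n)%N) (inord (t %% n)%N).
rewrite !inordK ?ltn_pmod //; last first.
  by rewrite ltn_divLR // -NS; apply: leq_trans ht _.
by rewrite -divn_eq /cext valK.
Qed.

Lemma bas_span V : Lspan V -> exists c : 'I_NN -> C, forall i, V i = Ccomb bas c i.
Proof.
case=> a ha.
pose L := @ord_max k.
exists (fun t => a (inord (t %/ n)%N) (inord (t %% n)%N) - (((t %/ n)%N == (t %% n)%N)%:R) * a L L).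
move=> i; rewrite comb_eq ha.
have ec : forall l m : 'I_n, cext (fun t : 'I_NN => a (inord (t %/ n)%N) (inord (t %% n)%N)
     - (((t %/ n)%N == (t %% n)%N)%:R) * a L L) (l * n + m)%N = a l m - (l == m)%:R * a L L.
  move=> l m; rewrite /cext; case: insubP => [u hu uv|hN].
    rewrite uv divnMDl // divn_small // addn0 modnMDl modn_small //.
    by rewrite !inord_val.
  have hl : l = L.
    apply: val_inj => /=; move: hN; rewrite -leqNgt; have := NS;
    have := ltn_ord l; have := ltn_ord m; nia.
  have hm : m = L.
    apply: val_inj => /=; move: hN; rewrite -leqNgt; have := NS;
    have := ltn_ord l; have := ltn_ord m; nia.
  by rewrite hl hm eqxx mul1r subrr.
under [RHS]eq_bigr => l _ do under eq_bigr => m _ do rewrite ec cstB mulrBl.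
have e3 : forall l : 'I_n, \sum_(m < n) cst n ((l == m)%:R * a L L) * Y l m i
    = cst n (a L L) * Y l l i.
  move=> l; rewrite (bigD1 l) //= eqxx mul1r big1 ?addr0 // => m hm.
  by rewrite eq_sym (negbTE hm) mul0r cst0 mul0r.
under [RHS]eq_bigr => l _ do rewrite sumrB e3.
by rewrite sumrB -mulr_sumr Ydiag_sum // mulr0 subr0.
Qed.

End Dim.

Theorem theorem2 (n : nat) (hn : (2 <= n)%N) :
  (forall V W : vfield n, Lspan V -> Lspan W -> Lspan (lie V W)) /\
  has_Cdim (@Lspan n) (n ^ 2 - 1).
Proof.
case: n hn => [//|k] hk; split.
  by move=> V W; apply: lie_closed.
exists (@bas k); split.
- by move=> t; apply: LspanY.
- exact: bas_indep.
- exact: bas_span.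
Qed.
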